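(* The class of data languages accepted by SAFA is not closed under homomorphism: there exist a data language $L\subseteq(\Sigma\times D)^*$ accepted by some SAFA and a homomorphism $h:(\Sigma\times D)^*\to(\Sigma\times D)^*$ such that no SAFA accepts $h(L)=\{h(w): w\in L\}$.
   Context: $D$ is a fixed countably infinite set of data values; for a finite alphabet $\Sigma$, data words are elements of $(\Sigma\times D)^*$. A homomorphism of data words is a monoid homomorphism $h:(\Sigma\times D)^*\to(\Sigma\times D)^*$, i.e. $h(\varepsilon)=\varepsilon$ and $h(uv)=h(u)h(v)$, determined by the images $h((a,d))$ of single letters. A set augmented finite automaton (SAFA) is a tuple $M=(Q,\Sigma\times D,q_0,F,H,\delta)$: $Q$ finite set of states, $q_0\in Q$ initial, $F\subseteq Q$ final, $H=\{h_1,\dots,h_m\}$ a finite collection of (names of) sets of data values, $\delta\subseteq Q\times\Sigma\times C\times OP\times Q$ with $C=\{p(h_i),\,!p(h_i)\}$, $OP=\{-\}\cup\{\mathsf{ins}(h_i)\}$. Configurations are $(q,\langle S_1,\dots,S_m\rangle)$ with $S_i\subseteq D$ finite; initially state $q_0$ and all sets empty. On reading $(a,d)$, a transition $(q,a,\alpha,op,q')$ from the current state may be taken if $\alpha=p(h_i)$ and $d\in S_i$, or $\alpha=\,!p(h_i)$ and $d\notin S_i$; then the state becomes $q'$ and if $op=\mathsf{ins}(h_j)$ the value $d$ is added to $S_j$ ($op=-$ changes nothing). A word is accepted if some run reads it entirely and ends in $F$. *)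

(* Defs.v *)
From mathcomp Require Import all_boot.
Set Implicit Arguments. Unset Strict Implicit. Unset Printing Implicit Defensive.

Definition data := nat.

Definition dword (Sigma : Type) := seq (Sigma * data).

Definition is_dword_hom (Sigma : Type) (h : dword Sigma -> dword Sigma) : Prop :=
  h [::] = [::] /\ forall u v, h (u ++ v) = h u ++ h v.

(* Conditions: cond_in i = p(h_i), cond_notin i = !p(h_i) *)
Inductive cond (m : nat) := cond_in of 'I_m | cond_notin of 'I_m.

(* Operations: None = '-', Some j = ins(h_j) *)
Definition op (m : nat) := option 'I_m.

Record safa (Sigma : finType) := Safa {
  st : finType;
  q0 : st;
  fin : {set st};
  nsets : nat;
  delta : st -> Sigma -> cond nsets -> op nsets -> st -> bool
    (* delta ⊆ Q x Sigma x C x OP x Q, as a (finite) relation *)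
}.

(* Configurations: a state and m finite sets of data values (as lists). *)
Definition config (Sigma : finType) (M : safa Sigma) :=
  (st M * ('I_(nsets M) -> seq data))%type.

Definition init_config (Sigma : finType) (M : safa Sigma) : config M :=
  (q0 M, fun _ => [::]).

Definition cond_holds (m : nat) (c : cond m) (S : 'I_m -> seq data) (d : data) : bool :=
  match c with
  | cond_in i => d \in S i
  | cond_notin i => d \notin S i
  end.

Definition apply_op (m : nat) (o : op m) (S : 'I_m -> seq data) (d : data)
  : 'I_m -> seq data :=
  match o with
  | None => S
  | Some j => fun i => if i == j then d :: S i else S i
  end.

Definition step (Sigma : finType) (M : safa Sigma)
  (c : config M) (x : Sigma * data) (c' : config M) : Prop :=
  exists (al : cond (nsets M)) (o : op (nsets M)),
    [/\ delta c.1 x.1 al o c'.1,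
        cond_holds al c.2 x.2 &
        c'.2 = apply_op o c.2 x.2].

Inductive run (Sigma : finType) (M : safa Sigma) : config M -> dword Sigma -> config M -> Prop :=
  | run_nil c : run c [::] c
  | run_cons c c' c'' x w : step c x c' -> run c' w c'' -> run c (x :: w) c''.

Definition accepts (Sigma : finType) (M : safa Sigma) (w : dword Sigma) : Prop :=
  exists c, run (init_config M) w c /\ c.1 \in fin M.

(* Main.v *)
Require Import Defs.
From mathcomp Require Import all_boot.

Definition Mex : safa unit :=
  @Safa unit bool false [set true] 1
    (fun q _ c _ q' => match c with cond_notin _ => ~~ q && q' | _ => false end).

Definition hex (u : dword unit) : dword unit := map (fun x => (x.1, 0)) u.

Theorem theorem9 :
  exists (Sigma : finType) (M : safa Sigma) (h : dword Sigma -> dword Sigma),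
    is_dword_hom h /\
    forall M' : safa Sigma,
      ~ (forall w : dword Sigma,
           accepts M' w <-> exists u : dword Sigma, accepts M u /\ h u = w).
Proof.
exists (unit : finType), Mex, hex; split.
  by split => // u v; rewrite /hex map_cat.
move=> M' H.
have [_ H0] := H [:: (tt, 0)].
have : accepts M' [:: (tt, 0)].
  apply: H0; exists [:: (tt, 0)]; split => //.
  exists (true, fun _ => [::]); split => //.
  econstructor; last exact: run_nil.
  by exists (cond_notin ord0), None.
  by rewrite /= inE.
case=> c [Hr Hf].
inversion Hr; subst.
inversion H6; subst.
case: H4 => al [o [Hd Hc He]].
have [H1 _] := H [:: (tt, 1)].
have : accepts M' [:: (tt, 1)].
  exists (c.1, apply_op o (fun _ => [::]) 1); split => //.
  econstructor; last exact: run_nil.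
  exists al, o; split => //.

move/H1 => [[|x [|y u]] [_ //]].

Qed.
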